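(* Let $(\Omega,T)$ be a strictly ergodic subshift over a finite alphabet $A\subset\mathbb{R}$ and $E\in\mathbb{R}$. Then $M^E$ is uniform if and only if the limit $\lim_{|x|\to\infty}\frac{F^E(x)}{|x|}$ (over $x\in\mathcal{W}$) exists.
   Context: Let $A\subset\mathbb{R}$ be finite with the discrete topology, $A^{\mathbb{Z}}$ with the product topology, and $T$ the shift $(Ta)(n)=a(n+1)$. A subshift is a closed $T$-invariant set $\Omega\subset A^{\mathbb{Z}}$; strictly ergodic means every orbit is dense and there is exactly one $T$-invariant Borel probability measure. $\mathcal{W}$ is the set of finite subwords of elements of $\Omega$ and $|x|$ the length of $x$. For $E\in\mathbb{R}$, $M^E(\omega)=\begin{pmatrix}E-\omega(1)&-1\\1&0\end{pmatrix}$, $M^E(n,\omega)=M^E(T^{n-1}\omega)\cdots M^E(\omega)$ for $n>0$, $\mathrm{Id}$ for $n=0$, $M^E(T^n\omega)^{-1}\cdots M^E(T^{-1}\omega)^{-1}$ for $n<0$. With $\|\cdot\|$ the operator norm, $M^E$ is uniform if $\lim_{|n|\to\infty}\frac1{|n|}\log\|M^E(n,\omega)\|$ exists for every $\omega\in\Omega$ and the convergence is uniform on $\Omega$. Define $F^E:\mathcal{W}\to\mathbb{R}$ by $F^E(x)=\log\|M^E(|x|,\omega)\|$, where $\omega\in\Omega$ is any element with $\omega(1)\cdots\omega(|x|)=x$ (this is independent of the choice of $\omega$). *)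

(* Defs.v *)
From HB Require Import structures.
From mathcomp Require Import all_boot all_order all_algebra.
From mathcomp Require Import all_classical all_reals all_analysis.
Set Implicit Arguments. Unset Strict Implicit. Unset Printing Implicit Defensive.
Import Order.TTheory GRing.Theory Num.Theory.
Local Open Scope classical_set_scope.
Local Open Scope ring_scope.

Section Subshift.
Variable R : realType.
Implicit Types w : int -> R.

(* Elements of R^Z; the full shift A^Z is the set of sequences with values in A. *)
Definition seqZ := int -> R.
HB.instance Definition _ := gen_eqMixin seqZ.
HB.instance Definition _ := gen_choiceMixin seqZ.
HB.instance Definition _ := isPointed.Build seqZ (fun _ => 0%R).

Definition shift (w : seqZ) : seqZ := fun n => w (n + 1).
Definition ushift (w : seqZ) : seqZ := fun n => w (n - 1).

Definition in_fullshift (A : seq R) (Om : set seqZ) : Prop :=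
  forall w, Om w -> forall n, w n \in A.

(* closedness in A^Z for the product of discrete topologies:
   a point of A^Z all of whose (centered) cylinder neighbourhoods meet Om lies in Om *)
Definition closed_in_fullshift (A : seq R) (Om : set seqZ) : Prop :=
  forall w : seqZ, (forall n, w n \in A) ->
    (forall N : nat, exists2 w', Om w' &
        forall j : int, (`|j|%N <= N)%N -> w' j = w j) ->
    Om w.

(* T-invariance: T(Om) = Om (T is a bijection of A^Z) *)
Definition shift_invariant (Om : set seqZ) : Prop :=
  forall w, Om w -> Om (shift w) /\ Om (ushift w).

Definition subshift (A : seq R) (Om : set seqZ) : Prop :=
  [/\ in_fullshift A Om, closed_in_fullshift A Om & shift_invariant Om].

Definition shiftZ (k : int) (w : seqZ) : seqZ := fun n => w (n + k).

(* every orbit {T^k w | k in Z} is dense in Om (product topology) *)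
Definition minimal_subshift (Om : set seqZ) : Prop :=
  forall w w', Om w -> Om w' -> forall N : nat,
    exists k : int, forall j : int, (`|j|%N <= N)%N -> shiftZ k w j = w' j.

(* cylinder sets; they generate the Borel sigma-algebra of the product topology *)
Definition cylinders : set (set seqZ) :=
  fun S => exists (n : int) (a : R), S = [set w | w n = a].

Local Notation seqZ_meas := (g_sigma_algebraType cylinders).

(* T-invariant Borel probability measures on Om (viewed as measures on the
   ambient space carried by Om) *)
Definition invariant_prob (Om : set seqZ) (mu : probability seqZ_meas R) : Prop :=
  mu (Om : set seqZ_meas) = 1%E /\
  forall B : set seqZ_meas, measurable B ->
     mu (@shift @^-1` B : set seqZ_meas) = mu B.

Definition uniquely_ergodic (Om : set seqZ) : Prop :=
  exists mu : probability seqZ_meas R, invariant_prob Om mu /\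
    forall nu : probability seqZ_meas R, invariant_prob Om nu ->
      forall B : set seqZ_meas, measurable B -> nu B = mu B.

Definition strictly_ergodic (Om : set seqZ) : Prop :=
  minimal_subshift Om /\ uniquely_ergodic Om.

Definition vnorm2 (v : 'cV[R]_2) : R := Num.sqrt (v 0 0 ^+ 2 + v 1 0 ^+ 2).
Definition opnorm (M : 'M[R]_2) : R :=
  sup [set vnorm2 (M *m v) | v in [set v | vnorm2 (v : 'cV[R]_2) = 1]].

Definition tmat (E a : R) : 'M[R]_2 :=
  \matrix_(i < 2, j < 2)
     if (i == 0 :> nat) then (if (j == 0 :> nat) then E - a else -1)
     else (if (j == 0 :> nat) then 1 else 0).

Definition Mone (E : R) (w : seqZ) : 'M[R]_2 := tmat E (w 1).

Fixpoint Mpos (E : R) (w : seqZ) (n : nat) : 'M[R]_2 :=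
  match n with
  | 0 => 1%:M
  | m.+1 => Mone E (iter m shift w) *m Mpos E w m
  end.

Fixpoint Mneg (E : R) (w : seqZ) (n : nat) : 'M[R]_2 :=
  match n with
  | 0 => 1%:M
  | m.+1 => invmx (Mone E (iter m.+1 ushift w)) *m Mneg E w m
  end.

Definition Mcocycle (E : R) (n : int) (w : seqZ) : 'M[R]_2 :=
  match n with
  | Posz m => Mpos E w m
  | Negz m => Mneg E w m.+1
  end.

Definition uniform_cocycle (Om : set seqZ) (E : R) : Prop :=
  exists L : seqZ -> R, forall eps : R, 0 < eps ->
    exists N : nat, forall n : int, (N <= `|n|%N)%N ->
      forall w, Om w ->
        `| ln (opnorm (Mcocycle E n w)) / (`|n|%N)%:R - L w | < eps.

Definition words (Om : set seqZ) (x : seq R) : Prop :=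
  exists2 w, Om w & exists k : int,
    forall i : nat, (i < size x)%N -> nth 0 x i = w (k + i%:Z).

(* M^E(|x|, w) for any w with w(1)...w(|x|) = x: product tmat x_|x| ... tmat x_1 *)
Definition wordmat (E : R) (x : seq R) : 'M[R]_2 :=
  foldl (fun M a => tmat E a *m M) 1%:M x.

Definition FE (E : R) (x : seq R) : R := ln (opnorm (wordmat E x)).

Definition word_limit_exists (Om : set seqZ) (E : R) : Prop :=
  exists l : R, forall eps : R, 0 < eps ->
    exists N : nat, forall x, words Om x -> (N <= size x)%N ->
      `| FE E x / (size x)%:R - l | < eps.

End Subshift.

(* Main.v *)
Require Import Defs.
From HB Require Import structures.
From mathcomp Require Import all_boot all_order all_algebra.
From mathcomp Require Import all_classical all_reals all_analysis.
From mathcomp Require Import ring lra zify.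
Set Implicit Arguments. Unset Strict Implicit.
Import Order.TTheory GRing.Theory Num.Theory.
Local Open Scope classical_set_scope.
Local Open Scope ring_scope.
Section Mx.
Variable R : realType.
Implicit Types (M A B P Q : 'M[R]_2) (v : 'cV[R]_2).

Lemma mul2E (m n : nat) (A : 'M[R]_(m,2)) (B : 'M[R]_(2,n)) i j :
  (A *m B) i j = A i 0 * B 0 j + A i 1 * B 1 j.
Proof.
rewrite mxE !big_ord_recl big_ord0 addr0.
have -> : lift ord0 ord0 = 1 :> 'I_2 by apply/val_inj.
by [].
Qed.

Lemma ord2P (i : 'I_2) : i = 0 \/ i = 1.
Proof. case: i => [[|[|k]]] Hi; [left|right|]; try by apply/val_inj. by []. Qed.

Definition frob2 M := M 0 0 ^+ 2 + M 0 1 ^+ 2 + M 1 0 ^+ 2 + M 1 1 ^+ 2.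
Definition det2 M := M 0 0 * M 1 1 - M 0 1 * M 1 0.
Definition adj2 M : 'M[R]_2 := \matrix_(i < 2, j < 2)
  if (i == 0 :> nat) then (if (j == 0 :> nat) then M 1 1 else - M 0 1)
  else (if (j == 0 :> nat) then - M 1 0 else M 0 0).

Lemma adj2E M : [/\ adj2 M 0 0 = M 1 1, adj2 M 0 1 = - M 0 1,
  adj2 M 1 0 = - M 1 0 & adj2 M 1 1 = M 0 0].
Proof. by rewrite !mxE. Qed.

Lemma tmatE (E a : R) : [/\ tmat E a 0 0 = E - a, tmat E a 0 1 = -1,
  tmat E a 1 0 = 1 & tmat E a 1 1 = 0].
Proof. by rewrite !mxE. Qed.

Lemma det2M A B : det2 (A *m B) = det2 A * det2 B.
Proof. rewrite /det2 !mul2E. ring. Qed.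

Lemma det2_tmat E a : det2 (tmat E a) = 1.
Proof. rewrite /det2; case: (tmatE E a) => -> -> -> ->. ring. Qed.

Lemma det2_adj M : det2 (adj2 M) = det2 M.
Proof. rewrite /det2; case: (adj2E M) => -> -> -> ->. ring. Qed.

Lemma frob2_adj M : frob2 (adj2 M) = frob2 M.
Proof. rewrite /frob2; case: (adj2E M) => -> -> -> ->; rewrite !sqrrN. ring. Qed.

Lemma mul_adj2 M : det2 M = 1 -> M *m adj2 M = 1%:M.
Proof.
move=> hd; apply/matrixP => i j; rewrite mul2E; rewrite /det2 in hd.
case: (adj2E M) => h1 h2 h3 h4.
case: (ord2P i) => ->; case: (ord2P j) => ->; rewrite ?h1 ?h2 ?h3 ?h4 !mxE /= -?hd; ring.
Qed.

Lemma inv_adj2 P Q : P *m Q = 1%:M -> det2 Q = 1 -> P = adj2 Q.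
Proof.
move=> hPQ hd; rewrite -[P]mulmx1 -(@mul_adj2 Q hd) mulmxA hPQ mul1mx //.
Qed.

Lemma vnorm2_ge0 v : 0 <= vnorm2 v.
Proof. exact: sqrtr_ge0. Qed.

Lemma vnorm2_sq v : vnorm2 v ^+ 2 = v 0 0 ^+ 2 + v 1 0 ^+ 2.
Proof. by rewrite /vnorm2 sqr_sqrtr // addr_ge0 // sqr_ge0. Qed.

Lemma mv_bound M v : vnorm2 (M *m v) ^+ 2 <= frob2 M * vnorm2 v ^+ 2.
Proof.
rewrite !vnorm2_sq !mul2E /frob2.
set a := M 0 0; set b := M 0 1; set c := M 1 0; set d := M 1 1.
set x := v 0 0; set y := v 1 0.
have h : 0 <= (a*y - b*x)^+2 + (c*y - d*x)^+2 by rewrite addr_ge0 // sqr_ge0.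
rewrite -subr_ge0; apply: le_trans h _; rewrite le_eqVlt; apply/orP; left; apply/eqP; ring.
Qed.

Definition e0 : 'cV[R]_2 := delta_mx 0 0.
Definition e1 : 'cV[R]_2 := delta_mx 1 0.

Lemma vnorm2_e0 : vnorm2 e0 = 1.
Proof. by rewrite /vnorm2 /e0 !mxE /= expr1n expr0n addr0 sqrtr1. Qed.
Lemma vnorm2_e1 : vnorm2 e1 = 1.
Proof. by rewrite /vnorm2 /e1 !mxE /= expr1n expr0n add0r sqrtr1. Qed.

Lemma Me0 M : (M *m e0) 0 0 = M 0 0 /\ (M *m e0) 1 0 = M 1 0.
Proof. by rewrite !mul2E /e0 !mxE /= mulr1 mulr0 addr0 mulr1 mulr0 addr0. Qed.
Lemma Me1 M : (M *m e1) 0 0 = M 0 1 /\ (M *m e1) 1 0 = M 1 1.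
Proof. by rewrite !mul2E /e1 !mxE /= mulr1 mulr0 add0r mulr1 mulr0 add0r. Qed.

Lemma mv_bound1 M v : vnorm2 (M *m v) <= Num.sqrt (frob2 M) * vnorm2 v.
Proof.
have hf : 0 <= frob2 M by rewrite /frob2 !addr_ge0 // sqr_ge0.
rewrite -(@ler_pXn2r _ 2) // ?nnegrE ?mulr_ge0 ?sqrtr_ge0 ?vnorm2_ge0 //.
by rewrite exprMn [Num.sqrt (frob2 M) ^+ 2]sqr_sqrtr //; apply: mv_bound.
Qed.

Let S M := [set vnorm2 (M *m v) | v in [set v : 'cV[R]_2 | vnorm2 v = 1]].

Lemma S_sup M : has_sup (S M).
Proof.
split; first by exists (vnorm2 (M *m e0)), e0 => //; exact: vnorm2_e0.
exists (Num.sqrt (frob2 M)) => y [v /= hv <-].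
by have := mv_bound1 M v; rewrite hv mulr1.
Qed.

Lemma op_unit M v : vnorm2 v = 1 -> vnorm2 (M *m v) <= opnorm M.
Proof. by move=> hv; apply: (sup_upper_bound (S_sup M)); exists v. Qed.

Lemma op_le M C : (forall v, vnorm2 v = 1 -> vnorm2 (M *m v) <= C) -> opnorm M <= C.
Proof.
move=> h; apply: ge_sup; first by exists (vnorm2 (M *m e0)), e0 => //; exact: vnorm2_e0.
by move=> y [v /= hv <-]; apply: h.
Qed.

Lemma op_ge0 M : 0 <= opnorm M.
Proof. apply: (le_trans (vnorm2_ge0 (M *m e0))); apply: op_unit; exact: vnorm2_e0. Qed.

Lemma vnorm2Z (s : R) v : vnorm2 (s *: v) = `|s| * vnorm2 v.
Proof.
rewrite /vnorm2 !mxE -sqrtr_sqr -sqrtrM ?sqr_ge0 //; congr Num.sqrt.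
ring.
Qed.

Lemma op_ub M v : vnorm2 (M *m v) <= opnorm M * vnorm2 v.
Proof.
have [h0|hn] := eqVneq (vnorm2 v) 0.
  have hs : v 0 0 ^+ 2 + v 1 0 ^+ 2 = 0.
    by rewrite -vnorm2_sq h0 expr0n.
  have hx : v 0 0 = 0.
    apply/eqP; rewrite -sqrf_eq0 eq_le sqr_ge0 andbT -hs lerDl sqr_ge0 //.
  have hy : v 1 0 = 0.
    apply/eqP; rewrite -sqrf_eq0 eq_le sqr_ge0 andbT -hs lerDr sqr_ge0 //.
  rewrite h0 mulr0 /vnorm2 !mul2E hx hy !mulr0 !addr0 expr0n addr0 sqrtr0 //.
have hp : 0 < vnorm2 v by rewrite lt_def hn vnorm2_ge0.
have hu : vnorm2 ((vnorm2 v)^-1 *: v) = 1.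
  by rewrite vnorm2Z ger0_norm ?invr_ge0 ?vnorm2_ge0 // mulVf.
have := op_unit M hu; rewrite -scalemxAr vnorm2Z ger0_norm ?invr_ge0 ?vnorm2_ge0 //.
by rewrite mulrC ler_pdivrMr.
Qed.

Lemma op_mul A B : opnorm (A *m B) <= opnorm A * opnorm B.
Proof.
apply: op_le => v hv; rewrite -mulmxA.
apply: le_trans (op_ub A (B *m v)) _.
by rewrite ler_wpM2l ?op_ge0 // -[opnorm B]mulr1 -hv op_ub.
Qed.

Lemma op_sq_frob M : opnorm M ^+ 2 <= frob2 M.
Proof.
have hf : 0 <= frob2 M by rewrite /frob2 !addr_ge0 // sqr_ge0.
have h : opnorm M <= Num.sqrt (frob2 M).
  by apply: op_le => v hv; have := mv_bound1 M v; rewrite hv mulr1.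
rewrite -(sqr_sqrtr hf) ler_pXn2r // ?nnegrE ?op_ge0 ?sqrtr_ge0 //.
Qed.

Lemma frob_op M : frob2 M <= 2 * opnorm M ^+ 2.
Proof.
have h0 := op_unit M vnorm2_e0; have h1 := op_unit M vnorm2_e1.
have g0 : vnorm2 (M *m e0) ^+ 2 <= opnorm M ^+ 2 by rewrite ler_pXn2r // ?nnegrE ?op_ge0 ?vnorm2_ge0.
have g1 : vnorm2 (M *m e1) ^+ 2 <= opnorm M ^+ 2 by rewrite ler_pXn2r // ?nnegrE ?op_ge0 ?vnorm2_ge0.
move: g0 g1; rewrite !vnorm2_sq; case: (Me0 M) => -> ->; case: (Me1 M) => -> ->.
rewrite /frob2 => g0 g1; lra.
Qed.

Lemma op_adj M : opnorm (adj2 M) <= 2 * opnorm M.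
Proof.
have h1 := op_sq_frob (adj2 M); rewrite frob2_adj in h1.
have h2 := frob_op M; have h3 := op_ge0 M; have h4 := op_ge0 (adj2 M).
nra.
Qed.

Lemma op_ge1 M : det2 M = 1 -> 1 <= opnorm M.
Proof.
move=> hd; have h2 := frob_op M; have h3 := op_ge0 M.
have h4 : 2 <= frob2 M.
  move: hd; rewrite /frob2 /det2 => hd.
  have : 0 <= (M 0 0 - M 1 1) ^+ 2 + (M 0 1 + M 1 0) ^+ 2 by rewrite addr_ge0 // sqr_ge0.
  nra.
nra.
Qed.
End Mx.

Section Dyn.
Variable R : realType.
Variable E : R.
Implicit Types (w : seqZ R).

Lemma iter_shift m w j : iter m (@Defs.shift R) w j = w (j + m%:Z).
Proof.
elim: m j => [|m IH] j /=; first by rewrite addr0.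
rewrite /Defs.shift IH; congr w; lia.
Qed.

Lemma iter_ushift m w j : iter m (@Defs.ushift R) w j = w (j - m%:Z).
Proof.
elim: m j => [|m IH] j /=; first by rewrite subr0.
rewrite /Defs.ushift IH; congr w; lia.
Qed.

Lemma foldl_wordmat x (M : 'M[R]_2) :
  foldl (fun (M : 'M[R]_2) a => tmat E a *m M) M x = wordmat E x *m M.
Proof.
rewrite /wordmat; elim: x M => [|a x IH] M /=; first by rewrite mul1mx.
by rewrite IH [in RHS]IH mulmx1 mulmxA.
Qed.

Lemma wordmat_cons a x : wordmat E (a :: x) = wordmat E x *m tmat E a.
Proof. by rewrite {1}/wordmat /= mulmx1 foldl_wordmat. Qed.

Lemma wordmat_rcons x a : wordmat E (rcons x a) = tmat E a *m wordmat E x.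
Proof. by rewrite /wordmat foldl_rcons. Qed.

Lemma det2_wordmat x : det2 (wordmat E x) = 1.
Proof.
elim: x => [|a x IH]; first by rewrite /wordmat /= /det2 !mxE /=; ring.
by rewrite wordmat_cons det2M IH det2_tmat mulr1.
Qed.

Lemma Mpos_word w x : (forall i, (i < size x)%N -> nth 0 x i = w (1 + i%:Z)) ->
  Mpos E w (size x) = wordmat E x.
Proof.
elim/last_ind: x => [|x a IH] h; first by [].
rewrite size_rcons /= wordmat_rcons -IH; last first.
  move=> i hi; rewrite -h ?size_rcons; last by apply: ltnW.
  by rewrite nth_rcons hi.
congr (_ *m _); rewrite /Mone iter_shift.
have := h (size x); rewrite size_rcons ltnSn nth_rcons ltnn eqxx => /(_ isT) ->.
congr (tmat E (w _)); lia.
Qed.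

Lemma Mpos_shift w n : Mpos E w n.+1 = Mpos E (Defs.shift w) n *m tmat E (w 1).
Proof.
elim: n => [|n IH]; first by rewrite /= mul1mx mulmx1.
rewrite -[LHS]/(Mone E (iter n.+1 (@Defs.shift R) w) *m Mpos E w n.+1) IH.
rewrite -[Mpos E (Defs.shift w) n.+1]/(Mone E (iter n (@Defs.shift R) (Defs.shift w)) *m Mpos E (Defs.shift w) n).
by rewrite mulmxA iterSr.
Qed.

Lemma Mpos_ext w w' n : (forall i, (i < n)%N -> w (1 + i%:Z) = w' (1 + i%:Z)) ->
  Mpos E w n = Mpos E w' n.
Proof.
elim: n => [|n IH] h //=.
rewrite IH; last by move=> i hi; apply: h; apply: ltnW.
rewrite /Mone !iter_shift; congr (tmat E _ *m _).
have := h n (ltnSn n); rewrite addrC => ->; by [].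
Qed.

Lemma det2_Mpos w n : det2 (Mpos E w n) = 1.
Proof.
elim: n => [|n IH]; first by rewrite /= /det2 !mxE /=; ring.
by rewrite /= det2M IH det2_tmat mulr1.
Qed.

Fixpoint negword w (m : nat) : seq R :=
  match m with 0 => [::] | m.+1 => w (- m%:Z) :: negword w m end.

Lemma size_negword w m : size (negword w m) = m.
Proof. by elim: m => //= m ->. Qed.

Lemma nth_negword w m i : (i < m)%N -> nth 0 (negword w m) i = w ((1 - m%:Z) + i%:Z).
Proof.
elim: m i => [|m IH] [|i] //= hi; first by congr w; lia.
rewrite IH //; congr w; lia.
Qed.

Lemma tmat_unit a : tmat E a \in unitmx.
Proof.
have h := @mul_adj2 R (tmat E a) (det2_tmat E a).
by case: (mulmx1_unit h).
Qed.

Lemma Mneg_word w m : Mneg E w m *m wordmat E (negword w m) = 1%:M.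
Proof.
elim: m => [|m IH]; first by rewrite /= /wordmat /= mulmx1.
rewrite /= wordmat_cons mulmxA -(mulmxA _ (Mneg E w m)) IH mulmx1.
have -> : Mone E (iter m.+1 (@Defs.ushift R) w) = tmat E (w (- m%:Z)).
  by rewrite /Mone iter_ushift; congr (tmat E (w _)); lia.
exact: mulVmx (tmat_unit _).
Qed.

Lemma Mneg_adj w m : Mneg E w m = adj2 (wordmat E (negword w m)).
Proof. apply: inv_adj2; [exact: Mneg_word | exact: det2_wordmat]. Qed.

End Dyn.

Section Real.
Variable R : realType.

Lemma eq_of_close (a b : R) : (forall e, 0 < e -> `|a - b| < e) -> a = b.
Proof.
move=> h; have [//|hne] := eqVneq a b.
have hp : 0 < `|a - b| by rewrite normr_gt0 subr_eq0.
by have := h _ hp; rewrite ltxx.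
Qed.

Lemma archi_N (K : R) : exists N : nat, forall n, (N <= n)%N -> K < n%:R.
Proof.
exists (Num.truncn K).+1 => n hn.
apply: lt_le_trans (truncnS_gt K) _; by rewrite ler_nat.
Qed.

Lemma lim_shift (x y : nat -> R) C a b :
  (forall n, `|x n - y n| <= C) ->
  (forall e, 0 < e -> exists N : nat, forall n, (N <= n)%N -> `|x n / n.+1%:R - a| < e) ->
  (forall e, 0 < e -> exists N : nat, forall n, (N <= n)%N -> `|y n / n%:R - b| < e) ->
  a = b.
Proof.
move=> hC hx hy; apply: eq_of_close => e he.
have he3 : 0 < e / 3 by rewrite divr_gt0.
have [N1 h1] := hx _ he3; have [N2 h2] := hy _ he3.
have [N3 h3] := archi_N ((C + `|b| + e / 3) / (e / 3)).
set n := (N1 + N2 + N3).+1.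
have hn1 : (N1 <= n)%N by rewrite /n; lia.
have hn2 : (N2 <= n)%N by rewrite /n; lia.
have hn3 : (N3 <= n.+1)%N by rewrite /n; lia.
have {}h1 := h1 n hn1; have {}h2 := h2 n hn2; have {}h3 := h3 n.+1 hn3.
set r := n.+1%:R in h1 h3; set m := n%:R in h2.
have hr : r = m + 1 by rewrite /r /m -natr1.
have hm : 0 < m by rewrite /m ltr0n.
have hr0 : 0 < r by rewrite hr; lra.
set q := x n / r in h1; set p := y n / m in h2.
have hxq : x n = q * r by rewrite /q mulrVK // unitfE gt_eqF.
have hyp : y n = p * m by rewrite /p mulrVK // unitfE gt_eqF.
have hqp : q - p = (x n - y n - p) / r.
  rewrite hxq hyp hr; field; rewrite -hr gt_eqF //.
have hC' := hC n.
have hpb : `|p| <= `|b| + e / 3.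
  have := ler_normD b (p - b); rewrite addrC subrK; lra.
have h4 : `|x n - y n - p| <= C + `|b| + e / 3.
  apply: le_trans (ler_normB _ _) _; lra.
rewrite ltr_pdivrMr // in h3.
have h5 : `|q - p| < e / 3.
  rewrite hqp normrM normfV (gtr0_norm hr0) ltr_pdivrMr //; lra.
rewrite distrC in h1.
have := ler_distD q a b; have := ler_distD p q b; lra.
Qed.

End Real.

Section Logs.
Variable R : realType.
Implicit Types (M A B : 'M[R]_2).

Lemma adj2K M : adj2 (adj2 M) = M.
Proof.
apply/matrixP => i j; case: (adj2E (adj2 M)) => h1 h2 h3 h4.
case: (adj2E M) => g1 g2 g3 g4.
case: (ord2P i) => ->; case: (ord2P j) => ->;
  rewrite ?h1 ?h2 ?h3 ?h4 ?g1 ?g2 ?g3 ?g4 ?opprK //.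
Qed.

Lemma op_gt0 M : det2 M = 1 -> 0 < opnorm M.
Proof. by move=> h; apply: lt_le_trans (op_ge1 h); rewrite ltr01. Qed.

Lemma ln_le (x y : R) : 0 < x -> 0 < y -> x <= y -> ln x <= ln y.
Proof. by move=> hx hy hxy; rewrite ler_ln ?posrE. Qed.

Lemma ln_mul (x y : R) : 0 < x -> 0 < y -> ln (x * y) = ln x + ln y.
Proof. by move=> hx hy; rewrite lnM ?posrE. Qed.

Lemma ln_op_adj M : det2 M = 1 -> `|ln (opnorm (adj2 M)) - ln (opnorm M)| <= ln 2.
Proof.
move=> hd; have hd' : det2 (adj2 M) = 1 by rewrite det2_adj.
have p1 := op_gt0 hd; have p2 := op_gt0 hd'.
have h1 := op_adj M; have h2 := op_adj (adj2 M); rewrite adj2K in h2.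
have t2 : (0 : R) < 2 by [].
have k1 := ln_le p2 (mulr_gt0 t2 p1) h1; rewrite ln_mul // in k1.
have k2 := ln_le p1 (mulr_gt0 t2 p2) h2; rewrite ln_mul // in k2.
rewrite ler_norml; apply/andP; split; lra.
Qed.

Lemma ln_op_mul A B : det2 A = 1 -> det2 B = 1 ->
  `|ln (opnorm (A *m B)) - ln (opnorm A)| <= ln (opnorm B) + ln (opnorm (adj2 B)).
Proof.
move=> hA hB; have hB' : det2 (adj2 B) = 1 by rewrite det2_adj.
have hAB : det2 (A *m B) = 1 by rewrite det2M hA hB mulr1.
have pA := op_gt0 hA; have pB := op_gt0 hB; have pB' := op_gt0 hB'.
have pAB := op_gt0 hAB.
have k1 := ln_le pAB (mulr_gt0 pA pB) (op_mul A B); rewrite ln_mul // in k1.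
have e : A = (A *m B) *m adj2 B by rewrite -mulmxA mul_adj2 // mulmx1.
have h2 := op_mul (A *m B) (adj2 B); rewrite -e in h2.
have k2 := ln_le pA (mulr_gt0 pAB pB') h2; rewrite ln_mul // in k2.
have g1 := ln_ge0 (op_ge1 hB); have g2 := ln_ge0 (op_ge1 hB').
rewrite ler_norml; apply/andP; split; lra.
Qed.
End Logs.

Lemma forward (R : realType) (Om : set (seqZ R)) (E : R) :
  word_limit_exists Om E -> uniform_cocycle Om E.
Proof.
move=> [l hl]; exists (fun _ => l) => eps he.
have he2 : 0 < eps / 2 by rewrite divr_gt0.
have [N1 h1] := hl _ he2.
have [N2 h2] := archi_N (ln 2 / (eps / 2)).
exists (maxn N1 N2.+1) => n hn w hw.
have hN1 : (N1 <= `|n|%N)%N by move: hn; rewrite geq_max => /andP[].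
have hN2 : (N2 < `|n|%N)%N by move: hn; rewrite geq_max => /andP[].
case: n hn hN1 hN2 => [k|m] hn hN1 hN2.
- set x := mkseq (fun i : nat => w (1 + i%:Z)) k.
  have hsx : size x = k by rewrite size_mkseq.
  have hwx : words Om x.
    exists w => //; exists 1 => i hi; rewrite nth_mkseq //; by rewrite -hsx.
  have := h1 x hwx; rewrite hsx => /(_ hN1) h.
  rewrite /FE -(@Mpos_word _ E w x) ?hsx in h; last first.
    by move=> i hi; rewrite nth_mkseq // -hsx.
  apply: lt_trans h _; lra.
- simpl in hN1, hN2.
  change (`|ln (opnorm (Mneg E w m.+1)) / m.+1%:R - l| < eps).
  rewrite Mneg_adj.
  set x := negword w m.+1.
  have hsx : size x = m.+1 by rewrite size_negword.
  have hwx : words Om x.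
    exists w => //; exists (1 - m.+1%:Z) => i hi; rewrite nth_negword //; by rewrite -hsx.
  have := h1 x hwx; rewrite hsx => /(_ hN1) h.
  have hb := ln_op_adj (det2_wordmat E x).
  have hmp : (0 : R) < m.+1%:R by rewrite ltr0n.
  have := h2 m.+1 (ltnW hN2); rewrite ltr_pdivrMr // => hk.
  rewrite /FE in h.
  set a := ln (opnorm (adj2 (wordmat E x))) in hb *.
  set b := ln (opnorm (wordmat E x)) in hb h.
  have e : a / m.+1%:R - l = (a - b) / m.+1%:R + (b / m.+1%:R - l).
    by field; rewrite gt_eqF.
  rewrite e; apply: le_lt_trans (ler_normD _ _) _.
  have : `|(a - b) / m.+1%:R| < eps / 2.
    rewrite normrM normfV (gtr0_norm hmp) ltr_pdivrMr //; lra.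
  lra.
Qed.

Lemma backward (R : realType) (A : seq R) (Om : set (seqZ R)) (E : R) :
  subshift A Om -> minimal_subshift Om ->
  uniform_cocycle Om E -> word_limit_exists Om E.
Proof.
move=> [_ _ hinv] hmin [L hL].
have hU : forall eps, 0 < eps -> exists N : nat, forall k : nat, (N <= k)%N ->
    forall w, Om w -> `|ln (opnorm (Mpos E w k)) / k%:R - L w| < eps.
  move=> eps he; have [N hN] := hL _ he; exists N => k hk w hw.
  exact: (hN (Posz k) hk w hw).
have hsh : forall w, Om w -> L (Defs.shift w) = L w.
  move=> w hw; have hw' := (hinv w hw).1.
  pose B := tmat E (w 1).
  apply/esym; apply: (@lim_shift _ (fun n => ln (opnorm (Mpos E w n.+1)))
     (fun n => ln (opnorm (Mpos E (Defs.shift w) n)))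
     (ln (opnorm B) + ln (opnorm (adj2 B)))).
  - move=> n; cbv beta; rewrite Mpos_shift; apply: ln_op_mul; [exact: det2_Mpos | exact: det2_tmat].
  - move=> e he; have [N hN] := hU _ he; exists N => n hn.
    exact: (hN n.+1 (leqW hn) w hw).
  - move=> e he; have [N hN] := hU _ he; exists N => n hn.
    exact: (hN n hn _ hw').
have shS : forall k (w : seqZ R), shiftZ (k + 1) w = Defs.shift (shiftZ k w).
  by move=> k w; apply/funext => j; rewrite /shiftZ /Defs.shift; congr w; lia.
have shU : forall k (w : seqZ R), shiftZ (k - 1) w = Defs.ushift (shiftZ k w).
  by move=> k w; apply/funext => j; rewrite /shiftZ /Defs.ushift; congr w; lia.
have sh0 : forall (w : seqZ R), shiftZ 0 w = w.
  by move=> w; apply/funext => j; rewrite /shiftZ addr0.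
have hZ : forall w, Om w -> forall k, Om (shiftZ k w) /\ L (shiftZ k w) = L w.
  move=> w hw.
  have hp : forall n : nat, Om (shiftZ n%:Z w) /\ L (shiftZ n%:Z w) = L w.
    elim=> [|n [IH1 IH2]]; first by rewrite sh0.
    rewrite -addn1 PoszD shS; split; first exact: (hinv _ IH1).1.
    by rewrite hsh.
  have hn : forall n : nat, Om (shiftZ (- n%:Z) w) /\ L (shiftZ (- n%:Z) w) = L w.
    elim=> [|n [IH1 IH2]]; first by rewrite oppr0 sh0.
    have -> : - (n.+1%:Z) = - n%:Z - 1 by lia.
    rewrite shU; have hu := (hinv _ IH1).2; split => //.
    rewrite -IH2 -hsh //; congr L; apply/funext => j.
    by rewrite /Defs.shift /Defs.ushift addrK.
  by case=> [n|n]; [exact: hp | rewrite NegzE; exact: hn].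
have hconst : forall w w', Om w -> Om w' -> L w = L w'.
  move=> w w' hw hw'; apply: eq_of_close => e he.
  have he2 : 0 < e / 2 by rewrite divr_gt0.
  have [N hN] := hU _ he2.
  have [k hk] := hmin w w' hw hw' N.
  have [hOk hLk] := hZ w hw k.
  have hM : Mpos E (shiftZ k w) N = Mpos E w' N.
    apply: Mpos_ext => i hi; apply: hk; lia.
  have g1 := hN N (leqnn N) _ hOk; have g2 := hN N (leqnn N) _ hw'.
  rewrite hM hLk in g1.
  have := ler_distD (ln (opnorm (Mpos E w' N)) / N%:R) (L w) (L w').
  rewrite distrC in g1; lra.
have [[w0 hw0]|hno] := pselect (exists w, Om w); last first.
  by exists 0 => e he; exists 0%N => x [w hw _]; exfalso; apply: hno; exists w.
exists (L w0) => e he; have [N hN] := hU _ he; exists N => x [w hw [k hk]] hsz.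
have [hO hLw] := hZ w hw (k - 1).
have := hN (size x) hsz _ hO; rewrite hLw (hconst w w0 hw hw0).
rewrite (@Mpos_word _ E _ x) // => i hi; rewrite hk // /shiftZ; congr w; lia.
Qed.

Theorem proposition4p4 (R : realType) (A : seq R) (Om : set (seqZ R)) (E : R) :
  subshift A Om -> strictly_ergodic Om ->
  (uniform_cocycle Om E <-> word_limit_exists Om E).
Proof.
move=> hs [hmin _]; split; [exact: backward hs hmin | exact: forward].
Qed.
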